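(* Let $\mu\in(0,1)$, $n>0$ and $k<0$ be real constants with $\frac{2k}{n^2}+\mu>0$, let $a_1=\frac{2k}{n^2}+\mu-1$, $b_1=\left(-\frac{\mu}{2k}\right)^{1/3}$, and assume $b_1^2>a_1^2$. Consider the system $$\ddot x-2n\dot y=\Omega_x,\qquad \ddot y+2n\dot x=\Omega_y,\qquad \ddot z=\Omega_z,$$ where $\Omega(x,y,z)=\frac{n^2}{2}(x^2+y^2)-k r_1^2+\frac{\mu}{r_2}$, $r_1^2=(x+\mu)^2+y^2+z^2$, $r_2^2=(x+\mu-1)^2+y^2+z^2$. Then each of the triangular equilibrium points $\left(\frac{2k}{n^2},0,\pm(b_1^2-a_1^2)^{1/2}\right)$ is linearly unstable: the characteristic equation of the variational (linearized) equations about the point, $$\lambda^6+2(n^2+3k)\lambda^4+n^2\left[n^2-6k\,\frac{3a_1^2-b_1^2}{b_1^2}\right]\lambda^2+6n^4k\,\frac{b_1^2-a_1^2}{b_1^2}=0,$$ has a positive real root $\lambda$.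
   Context: This is Robe's restricted three-body problem with the more massive primary an oblate spheroid ($n^2=1+\frac32 A_1$, $A_1$ the oblateness coefficient; $\mu=m_2/(m_1+m_2)$; $k$ a density-dependent constant). The variational equations about an equilibrium $(x_0,y_0,z_0)$ are obtained by substituting $(x_0+\xi,y_0+\eta,z_0+\zeta)$ and keeping linear terms: $\ddot\xi-2n\dot\eta=\Omega^0_{xx}\xi+\Omega^0_{xy}\eta+\Omega^0_{xz}\zeta$, $\ddot\eta+2n\dot\xi=\Omega^0_{yx}\xi+\Omega^0_{yy}\eta+\Omega^0_{yz}\zeta$, $\ddot\zeta=\Omega^0_{zx}\xi+\Omega^0_{zy}\eta+\Omega^0_{zz}\zeta$, where superscript $0$ denotes evaluation at the equilibrium; the characteristic equation comes from seeking solutions proportional to $e^{\lambda t}$. *)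

(* Defs.v *)
From Stdlib Require Import Reals.
From Coquelicot Require Import Coquelicot.
Open Scope R_scope.

Definition r1sq (mu x y z : R) : R := (x + mu) ^ 2 + y ^ 2 + z ^ 2.
Definition r2 (mu x y z : R) : R := sqrt ((x + mu - 1) ^ 2 + y ^ 2 + z ^ 2).

Definition Omega (n k mu : R) (x y z : R) : R :=
  n ^ 2 / 2 * (x ^ 2 + y ^ 2) - k * r1sq mu x y z + mu / r2 mu x y z.

Definition partial_x (f : R -> R -> R -> R) : R -> R -> R -> R :=
  fun x y z => Derive (fun t => f t y z) x.
Definition partial_y (f : R -> R -> R -> R) : R -> R -> R -> R :=
  fun x y z => Derive (fun t => f x t z) y.
Definition partial_z (f : R -> R -> R -> R) : R -> R -> R -> R :=
  fun x y z => Derive (fun t => f x y t) z.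

Definition det3 (a11 a12 a13 a21 a22 a23 a31 a32 a33 : R) : R :=
  a11 * (a22 * a33 - a23 * a32)
  - a12 * (a21 * a33 - a23 * a31)
  + a13 * (a21 * a32 - a22 * a31).

(* Characteristic determinant of the variational equations
     xi''  - 2n eta' = Oxx xi + Oxy eta + Oxz zeta
     eta'' + 2n xi'  = Oyx xi + Oyy eta + Oyz zeta
     zeta''          = Ozx xi + Ozy eta + Ozz zeta
   about (x0,y0,z0), for solutions proportional to e^(lambda t). *)
Definition char_det (n k mu x0 y0 z0 lam : R) : R :=
  let W := Omega n k mu in
  let Wx := partial_x W in let Wy := partial_y W in let Wz := partial_z W in
  det3 (lam ^ 2 - partial_x Wx x0 y0 z0) (- 2 * n * lam - partial_y Wx x0 y0 z0) (- partial_z Wx x0 y0 z0)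
       (2 * n * lam - partial_x Wy x0 y0 z0) (lam ^ 2 - partial_y Wy x0 y0 z0) (- partial_z Wy x0 y0 z0)
       (- partial_x Wz x0 y0 z0) (- partial_y Wz x0 y0 z0) (lam ^ 2 - partial_z Wz x0 y0 z0).

(* Main.v *)
Require Import Defs.
From Stdlib Require Import Reals Lra.
From Coquelicot Require Import Coquelicot.
Open Scope R_scope.
Definition S mu x y z := (x+mu-1)^2+y^2+z^2.
Lemma sq_sqrt' s : 0 < s -> sqrt s * sqrt s = s.
Proof. intros; apply sqrt_sqrt; lra. Qed.
Lemma loc_pos (f: R->R) t0: continuous f t0 -> 0 < f t0 -> locally t0 (fun t => 0 < f t).
Proof.
  intros Hc Hp. apply Hc. exists (mkposreal _ Hp). intros y Hy.
  change (Rabs (y - f t0) < f t0) in Hy. apply Rabs_def2 in Hy. lra.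
Qed.

Ltac normsq e := repeat match goal with |- context [sqrt ?a] => progress (replace a with e by ring) end;
  repeat match goal with |- context [?a * (?a * 1) + ?b * (?b * 1) + ?c * (?c * 1)] =>
     replace (a * (a * 1) + b * (b * 1) + c * (c * 1)) with e by ring end.
Ltac prep H e := normsq e;
  let Hs := fresh in let Hp := fresh in
  assert (Hs := sq_sqrt' _ H); assert (Hp : 0 < sqrt e) by (apply sqrt_lt_R0; lra);
  set (s := sqrt e) in *.
Ltac dtac := unfold S in *;
  match goal with H : 0 < ?e |- _ =>
  apply is_derive_unique; auto_derive;
  [ prep H e; repeat split; try lra; apply Rgt_not_eq; unfold Rgt; repeat (apply Rmult_lt_0_compat || apply pow_lt); lra
  | prep H e; match goal with Hs : _ * _ = e |- _ => rewrite <- Hs end; field; repeat split; lra ] end.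

Definition Fx n k mu x y z := n^2*x - 2*k*(x+mu) - mu*(x+mu-1)/(S mu x y z*sqrt (S mu x y z)).
Definition Fy n k mu x y z := n^2*y - 2*k*y - mu*y/(S mu x y z*sqrt (S mu x y z)).
Definition Fz (n k mu x y z : R) := - 2*k*z - mu*z/(S mu x y z*sqrt (S mu x y z)).

Lemma px n k mu x y z : 0 < S mu x y z -> partial_x (Omega n k mu) x y z = Fx n k mu x y z.
Proof. intros H. unfold partial_x, Omega, r1sq, r2, Fx. dtac. Qed.
Lemma py n k mu x y z : 0 < S mu x y z -> partial_y (Omega n k mu) x y z = Fy n k mu x y z.
Proof. intros H. unfold partial_y, Omega, r1sq, r2, Fy. dtac. Qed.
Lemma pz n k mu x y z : 0 < S mu x y z -> partial_z (Omega n k mu) x y z = Fz n k mu x y z.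
Proof. intros H. unfold partial_z, Omega, r1sq, r2, Fz. dtac. Qed.

Definition G mu x y z := mu / (S mu x y z ^ 2 * sqrt (S mu x y z)).

Lemma ext_deriv (f g h : R->R) t0 : continuous h t0 -> 0 < h t0 ->
  (forall t, 0 < h t -> f t = g t) -> Derive f t0 = Derive g t0.
Proof.
  intros Hc Hp E. apply Derive_ext_loc. apply (filter_imp (fun t => 0 < h t)).
  intros t Ht; auto. apply loc_pos; auto.
Qed.

Ltac d2 lem g h :=
  intros H; unfold partial_x, partial_y, partial_z;
  rewrite (ext_deriv _ g h); 
  [ | apply (@ex_derive_continuous R_AbsRing R_NormedModule); unfold S; auto_derive; auto | exact H | intros t Ht; apply lem; exact Ht];
  unfold Fx, Fy, Fz, G; dtac.

Lemma pxx n k mu x y z : 0 < S mu x y z -> partial_x (partial_x (Omega n k mu)) x y z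
  = n^2 - 2*k + (3*(x+mu-1)^2 - S mu x y z) * G mu x y z.
Proof. d2 px (fun t => Fx n k mu t y z) (fun t => S mu t y z). Qed.
Lemma pxy n k mu x y z : 0 < S mu x y z -> partial_y (partial_x (Omega n k mu)) x y z
  = 3*(x+mu-1)*y * G mu x y z.
Proof. d2 px (fun t => Fx n k mu x t z) (fun t => S mu x t z). Qed.
Lemma pxz n k mu x y z : 0 < S mu x y z -> partial_z (partial_x (Omega n k mu)) x y z
  = 3*(x+mu-1)*z * G mu x y z.
Proof. d2 px (fun t => Fx n k mu x y t) (fun t => S mu x y t). Qed.
Lemma pyx n k mu x y z : 0 < S mu x y z -> partial_x (partial_y (Omega n k mu)) x y z
  = 3*(x+mu-1)*y * G mu x y z.
Proof. d2 py (fun t => Fy n k mu t y z) (fun t => S mu t y z). Qed.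
Lemma pyy n k mu x y z : 0 < S mu x y z -> partial_y (partial_y (Omega n k mu)) x y z
  = n^2 - 2*k + (3*y^2 - S mu x y z) * G mu x y z.
Proof. d2 py (fun t => Fy n k mu x t z) (fun t => S mu x t z). Qed.
Lemma pyz n k mu x y z : 0 < S mu x y z -> partial_z (partial_y (Omega n k mu)) x y z
  = 3*y*z * G mu x y z.
Proof. d2 py (fun t => Fy n k mu x y t) (fun t => S mu x y t). Qed.
Lemma pzx n k mu x y z : 0 < S mu x y z -> partial_x (partial_z (Omega n k mu)) x y z
  = 3*(x+mu-1)*z * G mu x y z.
Proof. d2 pz (fun t => Fz n k mu t y z) (fun t => S mu t y z). Qed.
Lemma pzy n k mu x y z : 0 < S mu x y z -> partial_y (partial_z (Omega n k mu)) x y z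
  = 3*y*z * G mu x y z.
Proof. d2 pz (fun t => Fz n k mu x t z) (fun t => S mu x t z). Qed.
Lemma pzz n k mu x y z : 0 < S mu x y z -> partial_z (partial_z (Omega n k mu)) x y z
  = -2*k + (3*z^2 - S mu x y z) * G mu x y z.
Proof. d2 pz (fun t => Fz n k mu x y t) (fun t => S mu x y t). Qed.

Lemma cubic_root (n p q c : R) : 0 < n -> 0 < q -> c^2 = (n^2 - p) * (-q) ->
  exists lam, 0 < lam /\
   (lam^2 - p)*(lam^2-n^2)*(lam^2-q) + 4*n^2*lam^2*(lam^2-q) - c^2*(lam^2-n^2) = 0.
Proof.
  intros Hn Hq Hc.
  set (Q := fun lam => (lam^2 - p)*(lam^2-n^2)*(lam^2-q) + 4*n^2*lam^2*(lam^2-q) - c^2*(lam^2-n^2)).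
  set (T := 1 + Rabs p + n^2 + Rabs q + c^2).
  assert (HT : 1 <= T) by (unfold T; pose proof (Rabs_pos p); pose proof (Rabs_pos q); nra).
  assert (Q0 : Q 0 < 0).
  { unfold Q. assert (n^2 > 0) by nra. replace ((0^2 - p) * (0^2 - n^2) * (0^2 - q) + 4 * n^2 * 0^2 * (0^2 - q) - c^2 * (0^2 - n^2)) with (- n^2*n^2*q) by (rewrite Hc; ring). assert (0 < n^2*n^2*q) by (apply Rmult_lt_0_compat; [apply Rmult_lt_0_compat|]; lra). lra. }
  assert (QT : 0 < Q T).
  { unfold Q. set (L := T^2). assert (HL : T <= L) by (unfold L; nra).
    pose proof (Rabs_pos p); pose proof (Rabs_pos q); pose proof (Rle_abs p); pose proof (Rle_abs q).
    assert (h1 : 1 <= L - p) by (unfold T in *; nra).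
    assert (h2 : 1 + c^2 <= L - q) by (unfold T in *; nra).
    assert (h3 : 1 <= L - n^2) by (unfold T in *; nra).
    assert (h4 : 0 <= 4*n^2*L*(L-q)) by (assert (0 <= n^2) by nra; assert (0<=L) by lra; 
       apply Rmult_le_pos; [apply Rmult_le_pos|]; nra).
    assert (h5 : c^2 < (L-p)*(L-q)) by nra.
    nra. }
  assert (Hc' : continuity Q) by (intro; unfold Q; reg).
  destruct (IVT Q 0 T Hc' ltac:(lra) Q0 QT) as [z [Hz1 Hz2]].
  exists z. split; [|exact Hz2]. destruct Hz1 as [Hz1 _]. destruct (Rle_lt_or_eq_dec _ _ Hz1); auto.
  subst z. lra.
Qed.

Theorem mainTheorem2 (mu n k : R) :
  0 < mu < 1 -> 0 < n -> k < 0 ->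
  0 < 2 * k / n ^ 2 + mu ->
  let a1 := 2 * k / n ^ 2 + mu - 1 in
  let b1 := Rpower (- mu / (2 * k)) (1 / 3) in
  b1 ^ 2 > a1 ^ 2 ->
  forall z0 : R, z0 = sqrt (b1 ^ 2 - a1 ^ 2) \/ z0 = - sqrt (b1 ^ 2 - a1 ^ 2) ->
  let x0 := 2 * k / n ^ 2 in
  (partial_x (Omega n k mu) x0 0 z0 = 0 /\ partial_y (Omega n k mu) x0 0 z0 = 0 /\
   partial_z (Omega n k mu) x0 0 z0 = 0) /\
  exists lam : R, 0 < lam /\ char_det n k mu x0 0 z0 lam = 0.
Proof.
  intros Hmu Hn Hk Hpos a1 b1 Hab z0 Hz0 x0.
  assert (Hc : 0 < - mu / (2 * k)).
  { unfold Rdiv. replace (- mu * / (2 * k)) with (mu * / (- (2*k))) by (field; lra).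
    apply Rmult_lt_0_compat; [lra|]. apply Rinv_0_lt_compat; lra. }
  assert (Hb : 0 < b1) by (unfold b1, Rpower; apply exp_pos).
  assert (Hb3 : b1 ^ 3 = - mu / (2 * k)).
  { unfold b1. rewrite <- (Rpower_pow 3) by (unfold Rpower; apply exp_pos).
    rewrite Rpower_mult. replace (1 / 3 * INR 3) with 1 by (simpl; field). apply Rpower_1; exact Hc. }
  assert (Hmu' : mu = -2 * k * b1^3) by (rewrite Hb3; field; lra).
  assert (Hz2 : z0 ^ 2 = b1^2 - a1^2).
  { destruct Hz0 as [-> | ->]; [| rewrite <- Rsqr_pow2, <- Rsqr_neg, Rsqr_pow2];
    rewrite pow2_sqrt; lra. }
  assert (HS : S mu x0 0 z0 = b1^2).
  { unfold S, x0. replace (2 * k / n ^ 2 + mu - 1) with a1 by reflexivity. nra. }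
  assert (HSp : 0 < S mu x0 0 z0) by (rewrite HS; nra).
  assert (Hsq : sqrt (S mu x0 0 z0) = b1) by (rewrite HS; apply sqrt_pow2; lra).
  assert (HG : G mu x0 0 z0 * b1^2 = -2*k).
  { unfold G. rewrite Hsq, HS, Hmu'. field. lra. }
  assert (Ha : x0 + mu - 1 = a1) by reflexivity.
  split.
  - rewrite (px _ _ _ _ _ _ HSp), (py _ _ _ _ _ _ HSp), (pz _ _ _ _ _ _ HSp).
    unfold Fx, Fy, Fz. rewrite Hsq, HS, Ha.
    assert (Hm : forall w, mu * w / (b1^2*b1) = -2*k*w) by (intros w; rewrite Hmu'; field; lra).
    rewrite !Hm. unfold a1, x0.
    assert (n^2 <> 0) by (apply pow_nonzero; lra).
    split; [|split]; field; lra.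
  - unfold char_det. cbv zeta.
    rewrite (pxx _ _ _ _ _ _ HSp), (pxy _ _ _ _ _ _ HSp), (pxz _ _ _ _ _ _ HSp),
      (pyx _ _ _ _ _ _ HSp), (pyy _ _ _ _ _ _ HSp), (pyz _ _ _ _ _ _ HSp),
      (pzx _ _ _ _ _ _ HSp), (pzy _ _ _ _ _ _ HSp), (pzz _ _ _ _ _ _ HSp).
    rewrite HS, Ha. revert HG. generalize (G mu x0 0 z0) as g. intros g HG.
    assert (Hg : 0 < g).
    { assert (0 < b1^2) by nra. assert (0 < g * b1^2) by lra.
      destruct (Rlt_or_le 0 g); auto. nra. }
    assert (Hzz : 0 < z0^2) by lra.
    destruct (cubic_root n (n^2 - 2*k + (3*a1^2 - b1^2)*g) (3*z0^2*g) (3*a1*z0*g)) as [lam [Hl Hq]].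
    + lra.
    + apply Rmult_lt_0_compat; lra.
    + replace k with (-(g*b1^2)/2) by lra. field.
    + exists lam. split; [exact Hl|]. eapply eq_trans; [|exact Hq]. unfold det3.
      replace k with (-(g*b1^2)/2) by lra. assert (H4 : z0^4 = (b1^2-a1^2)^2) by (rewrite <- Hz2; ring).
      field_simplify. rewrite ?H4, ?Hz2. field.
Qed.
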